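(* For each integer $N\ge0$, the set of series $X=\sum_{p,q\ge0}x_{p,q}a^pb^q\in\widehat{\mathcal{A}}$ such that there exist $R>1$ and $C_R>0$ with $$|x_{p,q}|\le C_RR^{p+q}\frac{(p+q)!}{p!}(1+p+q)^N\qquad\forall p,q\ge0$$ is equal to the algebra $\tilde{\mathcal{A}}_{conv.}$.
   Context: $\widehat{\mathcal{A}}$ is the algebra of formal power series $\sum_{p,q\ge0}\gamma_{p,q}a^pb^q$ in variables $a,b$ with $ab-ba=b^2$ (the $(a,b)$-adic completion of the polynomial algebra with this relation). $\tilde{\mathcal{A}}_{conv.}\subset\widehat{\mathcal{A}}$ is the subalgebra of series with $|\gamma_{p,q}|\le C_RR^{p+q}q!$ for some $R>1$, $C_R>0$. *)

(* Defs.v *)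
From mathcomp Require Import all_boot all_order all_algebra.
Set Implicit Arguments. Unset Strict Implicit. Unset Printing Implicit Defensive.
Import Order.TTheory GRing.Theory Num.Theory.
Local Open Scope ring_scope.

(* An element X = \sum_{p,q>=0} x_{p,q} a^p b^q of \hat{A} (the completion of
   k<a,b>/(ab - ba - b^2)) is uniquely determined by its family of coefficients
   in the normally ordered (PBW) basis a^p b^q.  We therefore represent
   \hat{A} (as a set) by coefficient families nat -> nat -> K. *)
Definition series (K : numFieldType) := nat -> nat -> K.

Definition Aconv (K : numFieldType) (x : series K) : Prop :=
  exists (R C : K), 1 < R /\ 0 < C /\
    forall p q : nat, `|x p q| <= C * R ^+ (p + q) * (q`!)%:R.

Definition W (K : numFieldType) (N : nat) (x : series K) : Prop :=
  exists (R C : K), 1 < R /\ 0 < C /\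
    forall p q : nat,
      `|x p q| <= C * R ^+ (p + q) * ((p + q)`!%:R / (p`!)%:R)
                  * (1 + p%:R + q%:R) ^+ N.

(* Main.v *)
Require Import Defs.
From mathcomp Require Import all_boot all_order all_algebra.
Import Order.TTheory GRing.Theory Num.Theory.
Local Open Scope ring_scope.

Lemma bin_le_exp2 (n k : nat) : ('C(n, k) <= 2 ^ n)%N.
Proof.
elim: n k => [|n IH] [|k] //=.
- by rewrite bin0 expn_gt0.
- by rewrite binS expnS mul2n -addnn leq_add.
Qed.

Lemma fact_le (p q : nat) : ((p + q)`! <= p`! * q`! * 2 ^ (p + q))%N.
Proof.
have := bin_fact (leq_addl p q); rewrite addnK => <-.
by rewrite mulnC [(p`! * _)%N]mulnC leq_mul2l bin_le_exp2 orbT.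
Qed.

Lemma pow_le (n N : nat) : ((1 + n) ^ N <= 2 ^ (n * N))%N.
Proof.
rewrite expnM; case: N => [|N]; first by rewrite !expn0.
rewrite leq_exp2r // add1n; exact: ltn_expl.
Qed.

Theorem lemma1p1p6 (K : numFieldType) (N : nat) (x : series K) :
  W N x <-> Aconv x.
Proof.
split.
- move=> [R [C [R1 [C0 H]]]].
  exists (R * 2 ^+ N.+1), C; split; [|split] => //.
    apply: (lt_le_trans R1); rewrite ler_peMr ?exprn_ege1 ?ler1n //.
    by apply: ltW; apply: lt_trans R1.
  move=> p q; apply: (le_trans (H p q)).
  have R0 : 0 <= R by apply: ltW; apply: lt_trans R1.
  have e1 : (p + q)`!%:R / (p`!)%:R <= (q`!)%:R * 2 ^+ (p + q) :> K.
    rewrite ler_pdivrMr ?ltr0n ?fact_gt0 //.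
    rewrite -natrX -!natrM ler_nat.
    by rewrite mulnC mulnA fact_le.
  have e2 : (1 + p%:R + q%:R) ^+ N <= (2 ^+ N) ^+ (p + q) :> K.
    have -> : 1 + p%:R + q%:R = (1 + p + q)%N%:R :> K by rewrite !natrD.
    rewrite -!natrX ler_nat -expnM mulnC -addnA.
    exact: pow_le.
  have R0' : 0 < R by apply: lt_trans R1.
  rewrite exprMn exprSr exprMn -!mulrA ler_pM2l // ler_pM2l ?exprn_gt0 //.
  rewrite mulrA [X in _ <= X]mulrC [_ * q`!%:R]mulrC; apply: ler_pM => //.
  + by rewrite divr_ge0 ?ler0n.
  + by rewrite ?exprn_ge0 // addr_ge0 ?ler0n // addr_ge0.
- move=> [R [C [R1 [C0 H]]]].
  exists R, C; split; [|split] => //.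
  move=> p q; apply: (le_trans (H p q)).
  have R0 : 0 <= R by apply: ltW; apply: lt_trans R1.
  rewrite -[X in X <= _]mulr1 ler_pM //.
  + by rewrite !mulr_ge0 ?exprn_ge0 ?ler0n // ltW.
  + apply: ler_wpM2l; first by rewrite mulr_ge0 ?exprn_ge0 // ltW.
    rewrite ler_pdivlMr ?ltr0n ?fact_gt0 // -natrM ler_nat.
    have := bin_fact (leq_addl p q); rewrite addnK => <-.
    by rewrite leq_pmull // bin_gt0 leq_addl.
  + have -> : 1 + p%:R + q%:R = (1 + p + q)%N%:R :> K by rewrite !natrD.
    by rewrite exprn_ege1 // ler1n.
Qed.
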